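(* Let $(M,g,J)$ be almost Hermitian of even complex dimension $m=2n$, $n\geq1$, with complex spinor bundle $S^cM$ of a spin$^c$ structure, and let $\mathcal{V}=S_{n-1}\oplus S_n$. Then Clifford multiplication with $\Lambda^{1,1}M$-forms on $\mathcal{V}$ is injective: if $x\in M$, $\eta\in\Lambda^{1,1}_xM$ and $\gamma(\eta)\varphi=0$ for all $\varphi\in\mathcal{V}_x$, then $\eta=0$.
   Context: $\Omega=g(\cdot,J\cdot)$; $\gamma$ is Clifford multiplication; $S^cM=S_0\oplus\cdots\oplus S_m$ with $S_j$ the eigenbundle of $\gamma(\Omega)$ for eigenvalue $\mathbf{i}(m-2j)$. $\Lambda^{1,1}M$ denotes the bundle of real $J$-invariant $2$-forms. *)

(* Defs.v *)
From HB Require Import structures.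
From mathcomp Require Import all_boot all_order all_algebra.
From mathcomp Require Import complex.
Set Implicit Arguments. Unset Strict Implicit. Unset Printing Implicit Defensive.
Import Order.TTheory GRing.Theory Num.Theory.
Local Open Scope ring_scope.
Local Open Scope complex_scope.

(* Pointwise linear-algebra model of the tangent space T_xM at a point x:
   T_xM = R^d (d = 2m real dimension) with the standard inner product g and
   its standard orthonormal basis e_0,...,e_{d-1}.  Bilinear forms / linear
   maps are represented by their d x d matrices in this basis. *)

Definition almost_hermitian (R : rcfType) (d : nat) (J : 'M[R]_d) : Prop :=
  J^T *m J = 1%:M /\ J *m J = - 1%:M.

(* The Kaehler form Omega = g(., J .) has matrix Omega(e_i,e_j) = g(e_i, J e_j) = J i j. *)
Definition kaehler_form (R : rcfType) (d : nat) (J : 'M[R]_d) : 'M[R]_d :=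
  \matrix_(i, j) J i j.

(* eta is a real 2-form (eta(e_i,e_j) = A i j, A skew) which is J-invariant:
   eta(JX,JY) = eta(X,Y), i.e. eta is a section of Lambda^{1,1}. *)
Definition is_form11 (R : rcfType) (d : nat) (J A : 'M[R]_d) : Prop :=
  A^T = - A /\ J^T *m A *m J = A.

(* Clifford multiplication by the basis vectors e_i on a complex spinor
   module C^N: c i = gamma(e_i), satisfying X.X = -|X|^2, i.e.
   c_i c_j + c_j c_i = -2 delta_ij. *)
Definition clifford_rel (R : rcfType) (d N : nat) (c : 'I_d -> 'M[R[i]]_N) : Prop :=
  forall i j : 'I_d,
    c i *m c j + c j *m c i = (if i == j then - 2%:R else 0) *: (1%:M : 'M[R[i]]_N).

(* Clifford multiplication by a 2-form eta = sum_{i<j} eta(e_i,e_j) e_i ^ e_j: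
   gamma(eta) = sum_{i<j} eta(e_i,e_j) gamma(e_i) gamma(e_j). *)
Definition gamma2 (R : rcfType) (d N : nat) (c : 'I_d -> 'M[R[i]]_N) (A : 'M[R]_d)
  : 'M[R[i]]_N :=
  \sum_(i < d) \sum_(j < d | (i < j)%N) (A i j)%:C *: (c i *m c j).

Definition in_S (R : rcfType) (m N : nat) (J : 'M[R]_(2 * m))
  (c : 'I_(2 * m) -> 'M[R[i]]_N) (j : nat) (phi : 'cV[R[i]]_N) : Prop :=
  gamma2 c (kaehler_form J) *m phi = ('i * (m%:R - (2 * j)%:R)) *: phi.

Definition in_V (R : rcfType) (n N : nat) (J : 'M[R]_(2 * (2 * n)))
  (c : 'I_(2 * (2 * n)) -> 'M[R[i]]_N) (phi : 'cV[R[i]]_N) : Prop :=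
  exists phi1 phi2, in_S J c (n.-1) phi1 /\ in_S J c n phi2 /\ phi = phi1 + phi2.

(* Main.v *)
Require Import Defs.
From HB Require Import structures.
From mathcomp Require Import all_boot all_order all_algebra.
From mathcomp Require Import complex ring lra zify.
Import Order.TTheory GRing.Theory Num.Theory.
Local Open Scope ring_scope.
Local Open Scope complex_scope.
Set Implicit Arguments. Unset Strict Implicit. Unset Printing Implicit Defensive.

Section Gen.
Variables (K : fieldType) (M : nat).
Implicit Types (P Q O : 'M[K]_M) (x : 'cV[K]_M).

Lemma g_raise O P x lam s : O *m P - P *m O = s *: P -> O *m x = lam *: x ->
  O *m (P *m x) = (lam + s) *: (P *m x).
Proof.
move=> hc hx; have E : O *m P = P *m O + s *: P by rewrite -hc addrC subrK.
by rewrite mulmxA E mulmxDl -mulmxA hx -scalemxAl -scalemxAr -scalerDl.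
Qed.

Lemma g_BA P Q x k : P *m Q + Q *m P = k *: 1%:M -> P *m x = 0 ->
  P *m (Q *m x) = k *: x.
Proof.
move=> E hx; have E2 : P *m Q = k *: 1%:M - Q *m P by rewrite -E addrK.
by rewrite mulmxA E2 mulmxBl -mulmxA hx mulmx0 subr0 -scalemxAl mul1mx.
Qed.

Lemma g_pass P Q x : P *m Q + Q *m P = 0 -> P *m x = 0 -> P *m (Q *m x) = 0.
Proof.
move=> E hx; have E2 : P *m Q = - (Q *m P) by apply/eqP; rewrite -addr_eq0 E.
by rewrite mulmxA E2 mulNmx -mulmxA hx mulmx0 oppr0.
Qed.

Lemma g_comm0 O P Q x s : O *m P - P *m O = s *: Q -> O *m (P *m x) = 0 ->
  O *m x = 0 -> s *: (Q *m x) = 0.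
Proof.
move=> E h1 h2; rewrite scalemxAl -E mulmxBl -mulmxA h1 -(mulmxA P) h2.
by rewrite mulmx0 subr0.
Qed.

Lemma g_anti P Q : P *m Q + Q *m P = 0 -> P *m Q = - (Q *m P).
Proof. by move=> E; apply/eqP; rewrite -addr_eq0 E. Qed.

Lemma g_sq P : (2%:R : K) != 0 -> P *m P + P *m P = 0 -> P *m P = 0.
Proof.
move=> h2 E.
have : (2%:R : K) *: (P *m P) = 0 by rewrite scaler_nat mulr2n E.
by move/eqP; rewrite scaler_eq0 (negbTE h2) /= => /eqP.
Qed.

End Gen.

Section Cl.
Variables (R : rcfType) (d N : nat) (c : 'I_d -> 'M[R[i]]_N).
Hypothesis hc : clifford_rel c.

Definition dot (u v : 'cV[R]_d) : R := (u^T *m v) 0 0.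
Definition cv (v : 'cV[R]_d) : 'M[R[i]]_N := \sum_k (v k 0)%:C *: c k.

Lemma dotE u v : dot u v = \sum_k u k 0 * v k 0.
Proof. by rewrite /dot mxE; apply eq_bigr => k _; rewrite mxE. Qed.

Lemma cvD u v : cv (u + v) = cv u + cv v.
Proof. by rewrite /cv -big_split; apply eq_bigr => k _; rewrite mxE rmorphD scalerDl. Qed.

Lemma cvZ a u : cv (a *: u) = a%:C *: cv u.
Proof. by rewrite /cv scaler_sumr; apply eq_bigr => k _; rewrite mxE rmorphM scalerA. Qed.

Lemma cvN u : cv (- u) = - cv u.
Proof. by rewrite -scaleN1r cvZ rmorphN rmorph1 scaleN1r. Qed.

Lemma cv_mul u v : cv u *m cv v =
  \sum_k \sum_l ((u k 0)%:C * (v l 0)%:C) *: (c k *m c l).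
Proof.
rewrite /cv mulmx_suml; apply eq_bigr => k _.
rewrite -scalemxAl mulmx_sumr scaler_sumr; apply eq_bigr => l _.
by rewrite -scalemxAr scalerA.
Qed.

Lemma cv_anti u v : cv u *m cv v + cv v *m cv u =
  (- 2%:R * (dot u v)%:C) *: (1%:M : 'M[R[i]]_N).
Proof.
rewrite !cv_mul [X in _ + X]exchange_big -big_split /=.
rewrite dotE rmorph_sum mulr_sumr scaler_suml; apply eq_bigr => k _.
rewrite -big_split /= (bigD1 k) //= big1 ?addr0.
  by rewrite mulrC -scalerDr hc eqxx scalerA rmorphM; congr (_ *: _); ring.
move=> l /negbTE nkl; rewrite [(v l 0)%:C * _]mulrC -scalerDr hc.
by rewrite eq_sym nkl scale0r scaler0.
Qed.


Definition F (A : 'M[R]_d) : 'M[R[i]]_N :=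
  \sum_i \sum_j (A i j)%:C *: (c i *m c j).

Lemma skew_diag (A : 'M[R]_d) : A^T = - A -> forall i, A i i = 0.
Proof.
move=> hA i; have : A^T i i = (- A) i i by rewrite hA.
rewrite !mxE => /eqP; rewrite -subr_eq0 opprK -mulr2n -mulr_natr mulf_eq0.
by rewrite pnatr_eq0 orbF => /eqP.
Qed.

Lemma skew_entry (A : 'M[R]_d) : A^T = - A -> forall i j, A i j = - A j i.
Proof. by move=> hA i j; have := congr1 (fun M : 'M[R]_d => M j i) hA; rewrite !mxE. Qed.

Lemma anti_ne i j : i != j -> c i *m c j = - (c j *m c i).
Proof.
move=> /negbTE nij; apply/eqP; rewrite -subr_eq0 opprK.
by rewrite hc nij scale0r.
Qed.

Lemma F_gamma2 (A : 'M[R]_d) : A^T = - A -> F A = 2%:R *: gamma2 c A.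
Proof.
move=> hA; rewrite /F /gamma2 scaler_nat mulr2n.
have E : forall i j, (A i j)%:C *: (c i *m c j) =
   (if (i < j)%N then (A i j)%:C *: (c i *m c j) else 0) +
   (if (j < i)%N then (A j i)%:C *: (c j *m c i) else 0).
  move=> i j; case: (ltngtP i j) => [lij|lji|eij].
  - by rewrite addr0.
  - rewrite add0r skew_entry // anti_ne; last first.
      by apply/eqP => eji; move: lji; rewrite eji ltnn.
    by rewrite rmorphN scaleNr scalerN opprK.
  - have -> : i = j by apply: val_inj.
    by rewrite skew_diag // rmorph0 scale0r addr0.
have -> : \sum_(i < d) \sum_(j < d) (A i j)%:C *: (c i *m c j) = 
  \sum_(i < d) \sum_(j < d) ((if (i < j)%N then (A i j)%:C *: (c i *m c j) else 0) +
   (if (j < i)%N then (A j i)%:C *: (c j *m c i) else 0)).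
  by apply eq_bigr => i _; apply eq_bigr => j _; rewrite -E.
under eq_bigr do rewrite big_split /=.
rewrite big_split /= [X in _ + X]exchange_big /=.
by congr (_ + _); apply eq_bigr => i _; rewrite [RHS]big_mkcond.
Qed.


Lemma ccc i j k : c i *m c j *m c k - c k *m c i *m c j =
  (if j == k then - 2%:R else 0) *: c i - (if i == k then - 2%:R else 0) *: c j.
Proof.
have h1 : c j *m c k = (if j == k then - 2%:R else 0) *: 1%:M - c k *m c j.
  by rewrite -(hc j k) addrK.
have h2 : c k *m c i = (if i == k then - 2%:R else 0) *: 1%:M - c i *m c k.
  by rewrite -(hc i k) [X in X - _]addrC addrK.
rewrite -mulmxA h1 h2 mulmxBr mulmxBl -scalemxAr -scalemxAl mulmx1 mul1mx mulmxA.
by rewrite opprB addrA addrNK.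
Qed.

Lemma sum_if (M : zmodType) (f : 'I_d -> M) k :
  \sum_j (if j == k then f j else 0) = f k.
Proof. by rewrite -big_mkcond big_pred1_eq. Qed.

Lemma F_c (A : 'M[R]_d) k : A^T = - A ->
  F A *m c k - c k *m F A = 4%:R *: \sum_j (A k j)%:C *: c j.
Proof.
move=> hA.
have -> : F A *m c k - c k *m F A =
   \sum_i \sum_j ((A i j)%:C *: (c i *m c j *m c k - c k *m c i *m c j)).
  rewrite /F mulmx_suml mulmx_sumr -sumrB; apply eq_bigr => i _.
  rewrite mulmx_suml mulmx_sumr -sumrB; apply eq_bigr => j _.
  by rewrite -scalemxAl -scalemxAr scalerBr mulmxA.
have E : forall i j, (A i j)%:C *: (c i *m c j *m c k - c k *m c i *m c j) =
  (if j == k then ((A i j)%:C * - 2%:R) *: c i else 0) -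
  (if i == k then ((A i j)%:C * - 2%:R) *: c j else 0).
  move=> i j; rewrite ccc scalerBr.
  by case: (j == k); case: (i == k); rewrite ?scalerA ?mulr0 ?scale0r ?scaler0.
under eq_bigr do under eq_bigr do rewrite E.
under eq_bigr do rewrite sumrB sum_if.
rewrite sumrB.
have -> : \sum_(i < d) \sum_(j < d) (if i == k then ((A i j)%:C * - 2%:R) *: c j else 0)
   = \sum_(j < d) ((A k j)%:C * - 2%:R) *: c j.
  rewrite exchange_big; apply eq_bigr => j _.
  exact: (sum_if (fun i => ((A i j)%:C * - 2%:R) *: c j)).
have -> : 4%:R = 2%:R + 2%:R :> R[i] by rewrite -natrD.
rewrite scalerDl; congr (_ + _).
  rewrite scaler_sumr; apply eq_bigr => i _; rewrite scalerA (skew_entry hA i k).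
  by rewrite rmorphN; congr (_ *: _); ring.
rewrite -sumrN scaler_sumr; apply eq_bigr => i _; rewrite scalerA -scaleNr.
by congr (_ *: _); ring.
Qed.


Lemma F_cv (A : 'M[R]_d) v : A^T = - A ->
  F A *m cv v - cv v *m F A = - 4%:R *: cv (A *m v).
Proof.
move=> hA.
transitivity (\sum_k \sum_j (4%:R * (v k 0)%:C * (A k j)%:C) *: c j).
  rewrite /cv mulmx_sumr mulmx_suml -sumrB; apply eq_bigr => k _.
  rewrite -scalemxAl -scalemxAr -scalerBr F_c // scalerA scaler_sumr.
  by apply eq_bigr => j _; rewrite scalerA; congr (_ *: _); ring.
rewrite exchange_big /cv scaler_sumr; apply eq_bigr => j _.
rewrite mxE scalerA rmorph_sum mulr_sumr scaler_suml; apply eq_bigr => k _.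
rewrite (skew_entry hA j k) rmorphM rmorphN; congr (_ *: _).
by rewrite !(mulNr, mulrN) opprK -mulrA [(v k 0)%:C * _]mulrC.
Qed.

Lemma two_neq0 : (2%:R : R[i]) != 0.
Proof. by rewrite pnatr_eq0. Qed.

Lemma G_cv (A : 'M[R]_d) v : A^T = - A ->
  gamma2 c A *m cv v - cv v *m gamma2 c A = - 2%:R *: cv (A *m v).
Proof.
move=> hA.
have -> : gamma2 c A = 2%:R^-1 *: F A.
  by rewrite F_gamma2 // scalerA mulVf ?two_neq0 // scale1r.
rewrite -scalemxAl -scalemxAr -scalerBr F_cv // scalerA.
congr (_ *: _); have h2 := two_neq0.
have -> : 4%:R = 2%:R * 2%:R :> R[i] by rewrite -natrM.
by rewrite mulrN mulrA mulVf // mul1r.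
Qed.


Variable J : 'M[R]_d.
Hypothesis hJ : almost_hermitian J.

Lemma JT : J^T = - J.
Proof.
case: hJ => h1 h2.
by rewrite -[J^T]mulmx1 -(opprK (1%:M : 'M[R]_d)) -h2 mulmxN mulmxA h1 mul1mx.
Qed.

Lemma JJv (v : 'cV[R]_d) : J *m (J *m v) = - v.
Proof. by case: hJ => _ h2; rewrite mulmxA h2 mulNmx mul1mx. Qed.

Lemma dot_sym u v : dot u v = dot v u.
Proof. by rewrite !dotE; apply eq_bigr => k _; rewrite mulrC. Qed.

Lemma dot_JJ u v : dot (J *m u) (J *m v) = dot u v.
Proof.
case: hJ => h1 _.
by rewrite /dot trmx_mul mulmxA -(mulmxA u^T) h1 mulmx1.
Qed.

Lemma dot_J u v : dot (J *m u) v = - dot u (J *m v).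
Proof. by rewrite /dot trmx_mul JT mulmxN mulNmx mulmxA mxE. Qed.

Lemma dot_Jself u : dot u (J *m u) = 0.
Proof.
have h : dot u (J *m u) = - dot u (J *m u) by rewrite {1}dot_sym dot_J.
lra.
Qed.

Lemma dot_Jself' u : dot (J *m u) u = 0.
Proof. by rewrite dot_sym dot_Jself. Qed.

Lemma dotDl u v w : dot (u + v) w = dot u w + dot v w.
Proof. by rewrite /dot linearD /= mulmxDl mxE. Qed.


Definition ac (X Y : 'M[R[i]]_N) := X *m Y + Y *m X.
Definition Aop v := cv v + (- 'i) *: cv (J *m v).
Definition Bop v := cv v + 'i *: cv (J *m v).

Lemma ii : 'i * 'i = -1 :> R[i].
Proof. by rewrite -expr2 sqr_i. Qed.

Lemma ac_exp (P Q U V : 'M[R[i]]_N) (s t : R[i]) :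
  ac (P + s *: Q) (U + t *: V) = ac P U + t *: ac P V + s *: ac Q U + (s * t) *: ac Q V.
Proof.
rewrite /ac !mulmxDl !mulmxDr -!scalemxAl -!scalemxAr !scalerA.
set pu := P *m U; set up := U *m P; set pv := P *m V; set vp := V *m P.
set qu := Q *m U; set uq := U *m Q; set qv := Q *m V; set vq := V *m Q.
by apply/matrixP => i j; rewrite !mxE; ring.
Qed.

Lemma ac_cv a b : ac (cv a) (cv b) = (- 2%:R * (dot a b)%:C) *: 1%:M.
Proof. exact: cv_anti. Qed.

Lemma BA_self v : ac (Bop v) (Aop v) = (- 4%:R * (dot v v)%:C) *: 1%:M.
Proof.
rewrite /Aop /Bop ac_exp !ac_cv dot_Jself dot_Jself' dot_JJ rmorph0 !mulr0.
rewrite !scale0r !scaler0 !addr0 !scalerA -scalerDl; congr (_ *: _).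
have h := ii; have -> : 4%:R = 2%:R + 2%:R :> R[i] by rewrite -natrD.
by rewrite mulrN h; ring.
Qed.

Lemma BA_orth w v : dot w v = 0 -> dot (J *m w) v = 0 -> ac (Bop w) (Aop v) = 0.
Proof.
move=> h1 h2; have h3 : dot w (J *m v) = 0 by apply/eqP; rewrite -oppr_eq0 -dot_J h2.
rewrite /Aop /Bop ac_exp !ac_cv dot_JJ h1 h2 h3 rmorph0 !mulr0 !scale0r ?scaler0.
by rewrite !addr0.
Qed.

Lemma BB v w : ac (Bop v) (Bop w) = 0.
Proof.
rewrite /Bop ac_exp !ac_cv dot_JJ dot_J !scalerA -!scalerDl.
have h := ii; rewrite rmorphN.
set D := (dot v w)%:C; set X := (dot v (J *m w))%:C.
have -> : - 2%:R * D + 'i * (- 2%:R * X) + 'i * (- 2%:R * - X) + 'i * 'i * (- 2%:R * D) = 0.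
  by rewrite h; ring.
by rewrite scale0r.
Qed.


Lemma comm_lin (G X Y : 'M[R[i]]_N) (s : R[i]) :
  G *m (X + s *: Y) - (X + s *: Y) *m G = (G *m X - X *m G) + s *: (G *m Y - Y *m G).
Proof.
rewrite !mulmxDl !mulmxDr -!scalemxAl -!scalemxAr.
set gx := G *m X; set xg := X *m G; set gy := G *m Y; set yg := Y *m G.
by apply/matrixP => i j; rewrite !mxE; ring.
Qed.

Lemma G_A (A : 'M[R]_d) v : A^T = - A -> A *m J = J *m A ->
  gamma2 c A *m Aop v - Aop v *m gamma2 c A = - 2%:R *: Aop (A *m v).
Proof.
move=> hA hAJ; rewrite /Aop comm_lin !G_cv // mulmxA hAJ -mulmxA.
by rewrite scalerDr !scalerA mulrC.
Qed.

Lemma G_B (A : 'M[R]_d) v : A^T = - A -> A *m J = J *m A ->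
  gamma2 c A *m Bop v - Bop v *m gamma2 c A = - 2%:R *: Bop (A *m v).
Proof.
move=> hA hAJ; rewrite /Bop comm_lin !G_cv // mulmxA hAJ -mulmxA.
by rewrite scalerDr !scalerA mulrC.
Qed.

Lemma AopJ v : Aop (J *m v) = 'i *: Aop v.
Proof.
rewrite /Aop JJv cvN scalerDr scalerA mulrN ii opprK scale1r scalerN -scaleNr.
by rewrite opprK addrC.
Qed.

Lemma BopJ v : Bop (J *m v) = (- 'i) *: Bop v.
Proof.
rewrite /Bop JJv cvN scalerDr scalerA mulNr ii opprK scale1r scalerN scaleNr.
by rewrite addrC.
Qed.

Definition om := gamma2 c J.

Lemma om_A v : om *m Aop v - Aop v *m om = (- 2%:R * 'i) *: Aop v.
Proof. by rewrite /om (G_A v JT (erefl _)) AopJ scalerA. Qed.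

Lemma om_B v : om *m Bop v - Bop v *m om = (2%:R * 'i) *: Bop v.
Proof. by rewrite /om (G_B v JT (erefl _)) BopJ scalerA mulrN mulNr opprK. Qed.


Lemma BopD a b : Bop (a + b) = Bop a + Bop b.
Proof.
rewrite /Bop mulmxDr !cvD scalerDr.
set p := cv a; set q := cv b; set r := cv (J *m a); set s := cv (J *m b).
by apply/matrixP => i j; rewrite !mxE; ring.
Qed.

Lemma BopZ (t : R) a : Bop (t *: a) = t%:C *: Bop a.
Proof.
rewrite /Bop -scalemxAr !cvZ scalerDr !scalerA mulrC.
done.
Qed.

Lemma Bop0 : Bop 0 = 0.
Proof. by rewrite -(scale0r 0) BopZ rmorph0 scale0r. Qed.

Lemma BopE v : Bop v = cv v + 'i *: cv (J *m v). Proof. by []. Qed.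

Opaque Aop Bop.

Lemma A_raise v (x : 'cV[R[i]]_N) (lam : R[i]) : om *m x = lam *: x ->
  om *m (Aop v *m x) = (lam - 2%:R * 'i) *: (Aop v *m x).
Proof. by move=> hx; rewrite (g_raise (om_A v) hx) mulNr. Qed.

Lemma B_lower v (x : 'cV[R[i]]_N) (lam : R[i]) : om *m x = lam *: x ->
  om *m (Bop v *m x) = (lam + 2%:R * 'i) *: (Bop v *m x).
Proof. by move=> hx; rewrite (g_raise (om_B v) hx). Qed.

Lemma BA_apply v (x : 'cV[R[i]]_N) : Bop v *m x = 0 ->
  Bop v *m (Aop v *m x) = (- 4%:R * (dot v v)%:C) *: x.
Proof. exact: g_BA (BA_self v). Qed.

Lemma B_pass w v (x : 'cV[R[i]]_N) : dot w v = 0 -> dot (J *m w) v = 0 ->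
  Bop w *m x = 0 -> Bop w *m (Aop v *m x) = 0.
Proof. by move=> h1 h2; apply: g_pass (BA_orth h1 h2). Qed.

Lemma cc_self k : c k *m c k = - 1%:M.
Proof.
have h := hc k k; rewrite eqxx in h.
have h2 := two_neq0.
have h3 : (2%:R : R[i]) *: (c k *m c k) = 2%:R *: (- 1%:M).
  by rewrite scaler_nat mulr2n h scalerN scaleNr.
by rewrite -(scalerK h2 (c k *m c k)) h3 scalerK.
Qed.

Definition e (k : 'I_d) : 'cV[R]_d := delta_mx k 0.

Lemma cv_e k : cv (e k) = c k.
Proof.
rewrite /cv (bigD1 k) //= mxE !eqxx /= rmorph1 scale1r big1 ?addr0 //.
by move=> j /negbTE hj; rewrite mxE hj /= rmorph0 scale0r.
Qed.

Lemma Je k j : (J *m e k) j 0 = J j k.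
Proof. by rewrite /e -colE mxE. Qed.

Lemma F_J_row k : \sum_j (J k j)%:C *: c j = - cv (J *m e k).
Proof.
rewrite /cv -sumrN; apply eq_bigr => j _.
by rewrite Je (skew_entry JT k j) rmorphN scaleNr.
Qed.

Lemma vac_eig (x : 'cV[R[i]]_N) : (forall k, Bop (e k) *m x = 0) ->
  2%:R *: (om *m x) = ('i * d%:R) *: x.
Proof.
move=> hx.
rewrite /om scalemxAl -F_gamma2 ?JT // /F mulmx_suml.
transitivity (\sum_(k < d) 'i *: x); last first.
  by rewrite sumr_const card_ord -scaler_nat scalerA mulrC.
apply eq_bigr => k _.
have -> : \sum_j (J k j)%:C *: (c k *m c j) = c k *m \sum_j (J k j)%:C *: c j.
  by rewrite mulmx_sumr; apply eq_bigr => j _; rewrite scalemxAr.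
have hy : cv (J *m e k) *m x = 'i *: (c k *m x).
  have := hx k; rewrite BopE cv_e mulmxDl -scalemxAl => /eqP; rewrite addr_eq0 => /eqP H.
  by rewrite H scalerN scalerA ii scaleN1r opprK.
rewrite F_J_row mulmxN mulNmx -mulmxA hy -scalemxAr mulmxA cc_self mulNmx mul1mx.
by rewrite scalerN opprK.
Qed.


Lemma vac_exists (T : 'I_d -> 'M[R[i]]_N) (x0 : 'cV[R[i]]_N) : x0 != 0 ->
  (forall k l, T k *m T l = - (T l *m T k)) -> (forall k, T k *m T k = 0) ->
  exists x : 'cV[R[i]]_N, x != 0 /\ forall k, T k *m x = 0.
Proof.
move=> hx0 hT hT2.
suff H : forall r, (r <= d)%N -> exists x : 'cV[R[i]]_N,
    x != 0 /\ forall k : 'I_d, (k < r)%N -> T k *m x = 0.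
  by have [x [hx hk]] := H d (leqnn d); exists x; split => // k; apply: hk.
elim=> [|r IH] hr; first by exists x0.
have [x [hx hk]] := IH (ltnW hr).
pose kr := Ordinal hr.
have hkr : forall k : 'I_d, (k < r.+1)%N -> (k < r)%N \/ k = kr.
  move=> k; rewrite ltnS leq_eqVlt => /orP [/eqP hkv|]; last by left.
  by right; apply: val_inj.
case: (eqVneq (T kr *m x) 0) => [h0|hne].
  by exists x; split => // k /hkr [/hk|->].
exists (T kr *m x); split => // k /hkr [hlt|->].
  by rewrite mulmxA hT mulNmx -mulmxA hk // mulmx0 oppr0.
by rewrite mulmxA hT2 mul0mx.
Qed.

Lemma orth_exists (ws : seq 'cV[R]_d) : (size ws < d)%N ->
  exists v : 'cV[R]_d, v != 0 /\ all (fun w => dot w v == 0) ws.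
Proof.
move=> hs.
pose M : 'M[R]_(size ws, d) := \matrix_(i, j) (nth 0 ws i) j 0.
pose K := kermx M^T.
have hK : K != 0.
  rewrite -mxrank_eq0 /K mxrank_ker -lt0n subn_gt0.
  exact: leq_ltn_trans (rank_leq_col _) hs.
have [i hi] : exists i, row i K != 0.
  apply/existsP; apply: contraNT hK; rewrite negb_exists => /forallP hr.
  by apply/eqP/row_matrixP => i; rewrite row0; apply/eqP; rewrite -[_ == _]negbK hr.
exists (row i K)^T; split; first by rewrite trmx_eq0.
apply/allP => w /(nthP 0) [j hj <-].
have H : (row i K *m M^T) 0 (Ordinal hj) = 0.
  by rewrite -row_mul mulmx_ker row0 mxE.
rewrite mxE in H; apply/eqP; rewrite dotE; etransitivity; last exact: H.
apply eq_bigr => l _.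
by rewrite !mxE mulrC.
Qed.


Lemma dot_self_eq0 v : dot v v = 0 -> v = 0.
Proof.
rewrite dotE => h; apply/matrixP => i j; rewrite (ord1 j) mxE.
have h' : \sum_k v k 0 ^+ 2 = 0.
  by etransitivity; last exact: h; apply eq_bigr => k _; rewrite expr2.
have := psumr_eq0P (fun k _ => sqr_ge0 (v k 0)) h'; move=> /(_ i isT).
by move/eqP; rewrite sqrf_eq0 => /eqP.
Qed.

Lemma chain (u : 'cV[R]_d) (x : 'cV[R[i]]_N) (lam : R[i]) :
  x != 0 -> om *m x = lam *: x -> (forall w, Bop w *m x = 0) ->
  forall k, (2 * k < d)%N -> exists psi : 'cV[R[i]]_N, exists ws : seq 'cV[R]_d,
    [/\ psi != 0, om *m psi = (lam - (2 * k)%:R * 'i) *: psi, size ws = (2 * k)%N,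
        (forall w, all (fun z => dot z w == 0) ws -> Bop w *m psi = 0) &
        all (fun z => dot z u == 0) ws].
Proof.
move=> hx0 hx hB; elim=> [|k IH] hk.
  by exists x, [::]; split => //; rewrite muln0 mul0r subr0.
have hk' : (2 * k < d)%N by lia.
have [psi [ws [hpsi hom hsz hBw hu]]] := IH hk'.
have hs : (size [:: u, J *m u & ws] < d)%N by rewrite /= hsz; lia.
have [v [hv0 /= /and3P [/eqP huv /eqP hJuv hwsv]]] := orth_exists hs.
have hBv : Bop v *m psi = 0 by apply: hBw.
exists (Aop v *m psi), [:: v, J *m v & ws]; split.
- apply/eqP => h0; have := BA_apply hBv; rewrite h0 mulmx0 => /esym/eqP.
  rewrite scaler_eq0 (negbTE hpsi) orbF mulf_eq0 oppr_eq0 pnatr_eq0 /= fmorph_eq0.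
  by move=> /eqP /dot_self_eq0 hv; move: hv0; rewrite hv eqxx.
- rewrite (A_raise _ hom); congr (_ *: _).
  by rewrite mulnS natrD; ring.
- by rewrite /= hsz; lia.
- move=> w /= /and3P [/eqP hvw /eqP hJvw hws].
  apply: B_pass; last exact: hBw.
    by rewrite dot_sym.
  by rewrite dot_J dot_sym hJvw oppr0.
- apply/and3P; split => //.
    by rewrite dot_sym huv.
  by rewrite dot_J dot_sym hJuv oppr0.
Qed.


Lemma Bop_all (x : 'cV[R[i]]_N) : (forall k, Bop (e k) *m x = 0) ->
  forall w, Bop w *m x = 0.
Proof.
move=> hk w.
have -> : w = \sum_k w k 0 *: e k.
  rewrite {1}(matrix_sum_delta w); apply eq_bigr => k _.
  by rewrite big_ord1.
rewrite (big_morph Bop BopD Bop0) mulmx_suml big1 // => k _.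
by rewrite BopZ -scalemxAl hk scaler0.
Qed.

End Cl.

Unset Implicit Arguments.
Local Close Scope complex_scope.

Lemma sc1 (R : rcfType) (a : R[i]) : 'i%C * (a + 2%:R) - a * 'i%C - 2%:R * 'i%C = 0.
Proof. ring. Qed.

Lemma sc2 (R : rcfType) (a : R[i]) :
  'i%C * ((a + 2%:R) - (a + 2%:R)) + 2%:R * 'i%C = 'i%C * ((a + 2%:R) - a).
Proof. ring. Qed.

Theorem mainTheorem11 (R : rcfType) (n : nat) (hn : (1 <= n)%N)
  (J : 'M[R]_(2 * (2 * n))) (hJ : almost_hermitian J)
  (c : 'I_(2 * (2 * n)) -> 'M[R[i]]_(2 ^ (2 * n))) (hc : clifford_rel c)
  (eta : 'M[R]_(2 * (2 * n))) (heta : is_form11 J eta)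
  (hV : forall phi : 'cV[R[i]]_(2 ^ (2 * n)),
          in_V J c phi -> gamma2 c eta *m phi = 0) :
  eta = 0.
Proof.
have JT' := JT hJ.
have [hskew h11] := heta.
have hcomm : eta *m J = J *m eta.
  rewrite JT' !mulNmx in h11.
  rewrite -{1}h11 mulNmx -mulmxA hJ.2 mulmxN mulmx1 opprK //.
suff H : forall v : 'cV[R]_(2 * (2 * n)), eta *m v = 0.
  apply/matrixP => i j.
  have := congr1 (fun M : 'cV[R]_(2 * (2 * n)) => M i 0) (H (delta_mx j 0)).
  by rewrite -colE !mxE.
move=> v; set u := eta *m v.
have hN : (0 < 2 ^ (2 * n))%N by rewrite expn_gt0.
pose x0 : 'cV[R[i]]_(2 ^ (2 * n)) := const_mx 1.
have hx0 : x0 != 0.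
  apply/eqP => /matrixP /(_ (Ordinal hN) 0); rewrite !mxE; apply/eqP; exact: oner_neq0.
have [x [hx hxk]] := @vac_exists _ _ _ (fun k => Bop c J (e R k)) _ hx0
  (fun k l => g_anti (BB hc hJ (e R k) (e R l)))
  (fun k => g_sq (two_neq0 R) (BB hc hJ (e R k) (e R k))).
have hxall := Bop_all hxk.
have hxe := vac_eig hc hJ hxk.
have hxe' : om c J *m x = ('i%C * (2 * n)%:R) *: x.
  rewrite -[om c J *m x](scalerK (two_neq0 R)) hxe scalerA; congr (_ *: _).
  rewrite natrM; apply: (mulfI (two_neq0 R)); by rewrite mulVKf ?two_neq0 // mulrCA.
have hk : (2 * n.-1 < 2 * (2 * n))%N by lia.
have [psi [ws [hpsi hom hsz hBw hu]]] := chain hc hJ u hx hxe' hxall hk.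
have hBu : Bop c J u *m psi = 0 by apply: hBw.
have hkf : kaehler_form J = J by apply/matrixP => i j; rewrite mxE.
have h2n : ((2 * n)%:R : R[i]) = (2 * n.-1)%:R + 2%:R.
  by rewrite -{1}(prednK hn) mulnS natrD addrC.
set phi := Aop c J u *m psi.
have hphi : in_S J c n phi.
  rewrite /in_S hkf; rewrite (A_raise hc hJ u hom); congr (_ *: _).
  by rewrite subrr mulr0 h2n sc1.
have hBphi : in_S J c n.-1 (Bop c J v *m phi).
  move: hphi; rewrite /in_S hkf => hphi.
  by rewrite (B_lower hc hJ v hphi) h2n sc2.
have h0 : forall j, in_S J c j 0.
  by move=> j; rewrite /in_S mulmx0 scaler0.
have hG1 : gamma2 c eta *m phi = 0.
  by apply: hV; exists 0, phi; rewrite add0r; split => //; apply: h0.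
have hG2 : gamma2 c eta *m (Bop c J v *m phi) = 0.
  by apply: hV; exists (Bop c J v *m phi), 0; rewrite addr0; split => //; apply: h0.
have := g_comm0 (G_B hc v hskew hcomm) hG2 hG1.
move/eqP; rewrite scaler_eq0 oppr_eq0 (negbTE (two_neq0 R)) /= => /eqP hBuphi.
have := BA_apply hc hJ hBu; rewrite -/phi hBuphi => /esym/eqP.
rewrite scaler_eq0 (negbTE hpsi) orbF mulf_eq0 oppr_eq0 pnatr_eq0 /= fmorph_eq0.
by move=> /eqP /dot_self_eq0.
Qed.
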